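(* Let $L$ be an infinite field, let $\mathcal{T}$ be a non-discrete system of topologies over $L$, let $m\ge1$, and let $O$ be a nonempty $\mathcal{T}$-open subset of $L^m$. Then $|O| = |L|$.
   Context: An $L$-variety is a separated $L$-scheme of finite type (not necessarily reduced); $V(L)$ denotes its set of $L$-points. A system of topologies $\mathcal{T}$ over $L$ is a choice of topology on $V(L)$ for every $L$-variety $V$ such that for every morphism $f: V \to W$ of $L$-varieties: (1) the induced map $V(L) \to W(L)$ is continuous; (2) if $f$ is an open immersion then $V(L) \to W(L)$ is a topological open embedding; (3) if $f$ is a closed immersion then $V(L)\to W(L)$ is a topological closed embedding. $\mathcal{T}$ is called discrete if the $\mathcal{T}$-topology on $L = \mathbb{A}^1_L(L)$ is discrete, and non-discrete otherwise. *)

(* Defs.v *)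
From HB Require Import structures.
From mathcomp Require Import all_boot all_order all_algebra.
From mathcomp Require Import mpoly.
Set Implicit Arguments. Unset Strict Implicit. Unset Printing Implicit Defensive.
Import GRing.Theory.
Local Open Scope ring_scope.

(* Affine L-varieties (not necessarily reduced): an affine L-variety is
   Spec L[x_0..x_{n-1}]/I for an ideal I, represented by the pair (n, I). *)

Section AffineVarieties.
Variable L : fieldType.

Definition is_ideal (n : nat) (I : {mpoly L[n]} -> Prop) : Prop :=
  [/\ I 0,
      forall p q, I p -> I q -> I (p + q) &
      forall a p, I p -> I (a * p)].

Definition points (n : nat) (I : {mpoly L[n]} -> Prop) (x : 'I_n -> L) : Prop :=
  forall p, I p -> p.@[x] = 0.

(* A morphism Spec L[x_0..x_{n-1}]/I -> Spec L[y_0..y_{m-1}]/J is given by the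
   L-algebra map L[y]/J -> L[x]/I, y_j |-> phi_j, required to be well defined. *)
Definition pullback (n m : nat) (phi : m.-tuple {mpoly L[n]}) (g : {mpoly L[m]})
  : {mpoly L[n]} := comp_mpoly phi g.

Definition is_morphism (n : nat) (I : {mpoly L[n]} -> Prop)
    (m : nat) (J : {mpoly L[m]} -> Prop) (phi : m.-tuple {mpoly L[n]}) : Prop :=
  forall g, J g -> I (pullback phi g).

Definition point_map (n m : nat) (phi : m.-tuple {mpoly L[n]}) (x : 'I_n -> L)
  : 'I_m -> L := fun j => (tnth phi j).@[x].

(* Closed immersion: L[y]/J -> L[x]/I surjective. *)
Definition closed_immersion (n : nat) (I : {mpoly L[n]} -> Prop)
    (m : nat) (J : {mpoly L[m]} -> Prop) (phi : m.-tuple {mpoly L[n]}) : Prop :=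
  is_morphism I J phi /\
  forall a : {mpoly L[n]}, exists b : {mpoly L[m]}, I (a - pullback phi b).

(* Open immersion of affine schemes Spec A -> Spec B with h : B -> A:
   there are g_1..g_k in B such that the h(g_i) generate the unit ideal of A
   and each induced map B_{g_i} -> A_{h(g_i)} is an isomorphism. *)
Definition open_immersion (n : nat) (I : {mpoly L[n]} -> Prop)
    (m : nat) (J : {mpoly L[m]} -> Prop) (phi : m.-tuple {mpoly L[n]}) : Prop :=
  is_morphism I J phi /\
  exists gs : seq {mpoly L[m]},
    (exists cs : seq {mpoly L[n]},
        I (1 - \sum_(i < size gs) cs`_i * pullback phi gs`_i)) /\
    (forall g, g \in gs ->
       (* injectivity of B_g -> A_{h g} *)
       (forall b : {mpoly L[m]},
          (exists k : nat, I (pullback phi g ^+ k * pullback phi b)) ->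
          exists k : nat, J (g ^+ k * b)) /\
       (* surjectivity of B_g -> A_{h g} *)
       (forall a : {mpoly L[n]}, exists (b : {mpoly L[m]}) (e k : nat),
          I (pullback phi g ^+ k * (pullback phi b - pullback phi g ^+ e * a)))).

Definition is_topology (T : Type) (S : T -> Prop) (opens : (T -> Prop) -> Prop)
  : Prop :=
  [/\ forall U, opens U -> forall x, U x -> S x,
      opens S,
      forall (F : (T -> Prop) -> Prop), (forall U, F U -> opens U) ->
        opens (fun x => exists2 U, F U & U x) &
      forall U V, opens U -> opens V -> opens (fun x => U x /\ V x)].

(* A system of topologies over L (on affine L-varieties):
   sys n I is the family of open subsets of points I. *)
Definition system_of_topologies
    (sys : forall n : nat, ({mpoly L[n]} -> Prop) -> (('I_n -> L) -> Prop) -> Prop)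
  : Prop :=
  [/\
   forall n (I : {mpoly L[n]} -> Prop), is_ideal I -> is_topology (points I) (sys n I),
   forall n (I : {mpoly L[n]} -> Prop) m (J : {mpoly L[m]} -> Prop) phi,
     is_ideal I -> is_ideal J -> is_morphism I J phi ->
     forall U, sys m J U -> sys n I (fun x => points I x /\ U (point_map phi x)),
   (* (2) open immersions induce topological open embeddings *)
   forall n (I : {mpoly L[n]} -> Prop) m (J : {mpoly L[m]} -> Prop) phi,
     is_ideal I -> is_ideal J -> open_immersion I J phi ->
     (forall x y, points I x -> points I y -> point_map phi x = point_map phi y -> x = y) /\
     (forall U, sys n I U ->
        sys m J (fun y => exists2 x, U x & point_map phi x = y)) &
   (* (3) closed immersions induce topological closed embeddings *)
   forall n (I : {mpoly L[n]} -> Prop) m (J : {mpoly L[m]} -> Prop) phi,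
     is_ideal I -> is_ideal J -> closed_immersion I J phi ->
     (forall x y, points I x -> points I y -> point_map phi x = point_map phi y -> x = y) /\
     (forall U, sys n I U ->
        (* image of the closed set points I \ U is closed in points J *)
        sys m J (fun y => points J y /\
                  ~ exists2 x, (points I x /\ ~ U x) & point_map phi x = y))].

(* The zero ideal: Spec L[x_0..x_{m-1}] = affine m-space, with points L^m. *)
Definition zero_ideal (m : nat) : {mpoly L[m]} -> Prop := fun p => p = 0.

(* Discrete: every subset of L = A^1(L) is open. *)
Definition discrete_system
    (sys : forall n : nat, ({mpoly L[n]} -> Prop) -> (('I_n -> L) -> Prop) -> Prop)
  : Prop := forall U : ('I_1 -> L) -> Prop, sys 1 (@zero_ideal 1) U.

Definition infinite_type (T : eqType) : Prop := forall s : seq T, exists x, x \notin s.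

End AffineVarieties.

(* Main.v *)
Require Import Defs.
From mathcomp Require Import all_boot all_order all_algebra.
From mathcomp Require Import mpoly.
From mathcomp Require Import boolp classical_sets functions cardinality.
From Stdlib Require Import Classical.

Set Implicit Arguments. Unset Strict Implicit. Unset Printing Implicit Defensive.

Section Helpers.
Local Open Scope classical_set_scope.

Definition eps {T} (t0 : T) (P : T -> Prop) : T :=
  match pselect (exists x, P x) with
  | left H => proj1_sig (cid H)
  | right _ => t0 end.

Lemma eps_spec T (t0 : T) (P : T -> Prop) : (exists x, P x) -> P (eps t0 P).
Proof.
move=> H; rewrite /eps; case: pselect => [H'|//].
exact: (proj2_sig (cid H')).
Qed.

Definition inj_on {T U} (A : T -> Prop) (B : U -> Prop) (f : T -> U) :=
  (forall x, A x -> B (f x)) /\ (forall x y, A x -> A y -> f x = f y -> x = y).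
Definition le {T U} (A : T -> Prop) (B : U -> Prop) := exists f, inj_on A B f.

Lemma le_trans T U V (A : T -> Prop) (B : U -> Prop) (C : V -> Prop) :
  le A B -> le B C -> le A C.
Proof.
move=> [f [f1 f2]] [g [g1 g2]]; exists (fun x => g (f x)); split.
  by move=> x Ax; apply/g1/f1.
by move=> x y Ax Ay /g2 H; apply: f2 => //; apply: H; apply: f1.
Qed.

Lemma comparable T (t0 : T) (X Y : T -> Prop) : le X Y \/ le Y X.
Proof.
pose P (R : set (T * T)) :=
  [/\ forall x y, R (x, y) -> X x /\ Y y,
      forall x y y', R (x, y) -> R (x, y') -> y = y' &
      forall x x' y, R (x, y) -> R (x', y) -> x = x'].
have hP : forall F : set (set (T * T)), F `<=` P -> total_on F subset ->
    P (\bigcup_(R in F) R).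
  move=> F FP Ftot; split.
  - by move=> x y [R FR Rxy]; case: (FP R FR) => h _ _; exact: h.
  - move=> x y y' [R1 F1 R1xy] [R2 F2 R2xy].
    case: (Ftot _ _ F1 F2) => sub.
      by case: (FP _ F2) => _ h _; apply: h (sub _ R1xy) R2xy.
    by case: (FP _ F1) => _ h _; apply: h R1xy (sub _ R2xy).
  - move=> x x' y [R1 F1 R1xy] [R2 F2 R2xy].
    case: (Ftot _ _ F1 F2) => sub.
      by case: (FP _ F2) => _ _ h; apply: h (sub _ R1xy) R2xy.
    by case: (FP _ F1) => _ _ h; apply: h R1xy (sub _ R2xy).
have [R [[RXY Rf Ri] Rmax]] := Zorn_bigcup hP.
have [Hx|Hx] := classic (forall x, X x -> exists y, R (x, y)).
  left; exists (fun x => eps t0 (fun y => R (x, y))); split.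
    by move=> x Xx; have := eps_spec t0 (Hx x Xx) => /RXY [].
  move=> x x' Xx Xx' E; apply: (Ri x x' (eps t0 (fun y => R (x, y)))).
    exact: eps_spec (Hx x Xx).
  by rewrite E; exact: eps_spec (Hx x' Xx').
have [Hy|Hy] := classic (forall y, Y y -> exists x, R (x, y)).
  right; exists (fun y => eps t0 (fun x => R (x, y))); split.
    by move=> y Yy; have := eps_spec t0 (Hy y Yy) => /RXY [].
  move=> y y' Yy Yy' E; apply: (Rf (eps t0 (fun x => R (x, y)))).
    exact: eps_spec (Hy y Yy).
  by rewrite E; exact: eps_spec (Hy y' Yy').
exfalso.
have [x0 Hx0] := not_all_ex_not _ _ Hx.
have [Xx0 nx0] := imply_to_and _ _ Hx0.
have [y0 Hy0] := not_all_ex_not _ _ Hy.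
have [Yy0 ny0] := imply_to_and _ _ Hy0.
apply: (Rmax (fun p => R p \/ p = (x0, y0))).
  split; first by move=> p Rp; left.
  move=> /(_ (x0, y0) (or_intror erefl)) Rxy; apply: nx0; by exists y0.
split.
- by move=> x y [/RXY //|[-> ->]].
- move=> x y y' [h1|[e1 e2]] [h2|[e3 e4]]; subst => //.
  + by apply: (Rf x).
  + by exfalso; apply: nx0; exists y.
  + by exfalso; apply: nx0; exists y'.
- move=> x x' y [h1|[e1 e2]] [h2|[e3 e4]]; subst => //.
  + by apply: (Ri x x' y).
  + by exfalso; apply: ny0; exists x.
  + by exfalso; apply: ny0; exists x'.
Qed.


Lemma pair3 T (q q' : T * (T * T)) :
  q.1 = q'.1 -> q.2.1 = q'.2.1 -> q.2.2 = q'.2.2 -> q = q'.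
Proof. by case: q => a [b c]; case: q' => a' [b' c'] /= -> -> ->. Qed.

Section Hess.
Variables (T : Type) (X : T -> Prop) (e : nat -> T) (pr : nat * nat -> nat).
Hypothesis eX : forall n, X (e n).
Hypothesis einj : forall n m, e n = e m -> n = m.
Hypothesis prinj : forall p q, pr p = pr q -> p = q.

Definition Dom (G : set ((T * T) * T)) x := exists y z, G ((x, y), z).

Record good (G : set ((T * T) * T)) : Prop := Good {
  gf : forall p z z', G (p, z) -> G (p, z') -> z = z';
  gi : forall p p' z, G (p, z) -> G (p', z) -> p = p';
  gd : forall x y, Dom G x -> Dom G y -> exists z, G ((x, y), z);
  gs : forall x y z, G ((x, y), z) -> Dom G y;
  gr : forall p z, G (p, z) -> Dom G z;
  gX : forall x, Dom G x -> X x }.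

Definition G0 : set ((T * T) * T) := fun q =>
  exists i j, q.1 = (e i, e j) /\ q.2 = e (pr (i, j)).

Lemma G0_good : good G0.
Proof.
split.
- move=> p z z' [i [j /= [-> ->]]] [i' [j' /= [E ->]]].
  by case: E => /einj -> /einj ->.
- move=> p p' z [i [j /= [-> E]]] [i' [j' /= [-> E']]].
  by move: E'; rewrite E => /einj /prinj [-> ->].
- move=> x y [y1 [z1 [i [j /= [[-> _] _]]]]] [y2 [z2 [i' [j' /= [[-> _] _]]]]].
  by exists (e (pr (i, i'))), i, i'.
- move=> x y z [i [j /= [[_ ->] _]]].
  by exists (e j), (e (pr (j, j))), j, j.
- move=> p z [i [j /= [_ ->]]].
  by exists (e (pr (i, j))), (e (pr (pr (i, j), pr (i, j)))), (pr (i, j)), (pr (i, j)).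
- by move=> x [y [z [i [j /= [[-> _] _]]]]].
Qed.

Definition PP (G : set ((T * T) * T)) :=
  good G /\ ((exists q, G q) -> G0 `<=` G).

Lemma PP_chain (F : set (set ((T * T) * T))) : F `<=` PP -> total_on F subset ->
  PP (\bigcup_(R in F) R).
Proof.
move=> FP Ftot.
have DomU : forall R x, F R -> Dom R x -> Dom (\bigcup_(R in F) R) x.
  by move=> R x FR [y [z H]]; exists y, z, R.
have DomI : forall x, Dom (\bigcup_(R in F) R) x -> exists2 R, F R & Dom R x.
  by move=> x [y [z [R FR H]]]; exists R => //; exists y, z.
split; last first.
  move=> [q [R FR Rq]] r G0r; exists R => //.
  by case: (FP R FR) => _ /(_ (ex_intro _ q Rq)); apply.
split.
- move=> p z z' [R1 F1 H1] [R2 F2 H2].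
  case: (Ftot _ _ F1 F2) => sub.
    by case: (FP _ F2) => -[h _ _ _ _ _] _; apply: h (sub _ H1) H2.
  by case: (FP _ F1) => -[h _ _ _ _ _] _; apply: h H1 (sub _ H2).
- move=> p p' z [R1 F1 H1] [R2 F2 H2].
  case: (Ftot _ _ F1 F2) => sub.
    by case: (FP _ F2) => -[_ h _ _ _ _] _; apply: h (sub _ H1) H2.
  by case: (FP _ F1) => -[_ h _ _ _ _] _; apply: h H1 (sub _ H2).
- move=> x y /DomI [R1 F1 [y1 [z1 H1]]] /DomI [R2 F2 [y2 [z2 H2]]].
  case: (Ftot _ _ F1 F2) => sub.
    case: (FP _ F2) => -[_ _ h _ _ _] _.
    have [z Hz] := h x y (ex_intro _ y1 (ex_intro _ z1 (sub _ H1)))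
                       (ex_intro _ y2 (ex_intro _ z2 H2)).
    by exists z, R2.
  case: (FP _ F1) => -[_ _ h _ _ _] _.
  have [z Hz] := h x y (ex_intro _ y1 (ex_intro _ z1 H1))
                     (ex_intro _ y2 (ex_intro _ z2 (sub _ H2))).
  by exists z, R1.
- move=> x y z [R FR H]; apply: (DomU R) => //.
  by case: (FP _ FR) => -[_ _ _ h _ _] _; apply: h H.
- move=> p z [R FR H]; apply: (DomU R) => //.
  by case: (FP _ FR) => -[_ _ _ _ h _] _; apply: h H.
- move=> x /DomI [R FR H].
  by case: (FP _ FR) => -[_ _ _ _ _ h] _; apply: h.
Qed.


Lemma hess_main : exists h : T * T -> T, inj_on (fun p => X p.1 /\ X p.2) X h.
Proof.
have [G [[Gg G0G] Gmax]] := Zorn_bigcup PP_chain.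
have G0P : PP G0 by split; [exact: G0_good | move=> _; exact: subset_refl].
have Gne : exists q, G q.
  apply: NNPP => Gn; apply: (Gmax G0) => //; split.
    by move=> q Gq; exfalso; apply: Gn; exists q.
  move=> H; apply: Gn; exists ((e 0, e 0), e (pr (0%N, 0%N))); apply: H.
  by exists 0%N, 0%N.
have sub0 := G0G Gne.
pose A := Dom G.
have Ae : forall n, A (e n).
  by move=> n; exists (e n), (e (pr (n, n))); apply: sub0; exists n, n.
pose t0 := e 0.
pose f p := eps t0 (fun z => G (p, z)).
have fP : forall x y, A x -> A y -> G ((x, y), f (x, y)).
  by move=> x y Ax Ay; exact: eps_spec (gd Gg Ax Ay).
have fA : forall x y, A x -> A y -> A (f (x, y)).
  by move=> x y Ax Ay; apply: (gr Gg); apply: fP.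
have finj : forall x y x' y', A x -> A y -> A x' -> A y' ->
    f (x, y) = f (x', y') -> x = x' /\ y = y'.
  move=> x y x' y' Ax Ay Ax' Ay' E.
  have H2 := fP _ _ Ax' Ay'; rewrite -E in H2.
  by have := gi Gg (fP _ _ Ax Ay) H2; case.
have GA : forall x y z, G ((x, y), z) -> A x /\ A y.
  by move=> x y z H; split; [exists y, z | apply: (gs Gg) H].
have AX : forall x, A x -> X x by move=> x; apply: (gX Gg).
have e01 : e 0 <> e 1 by move=> /einj.
have e02 : e 0 <> e 2 by move=> /einj.
have e12 : e 1 <> e 2 by move=> /einj.
have nle : ~ le A (fun x => X x /\ ~ A x).
  move=> [g [gB ginj]].
  pose B b := exists2 a, A a & g a = b.
  pose ginv b := eps t0 (fun a => A a /\ g a = b).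
  have ginvP : forall b, B b -> A (ginv b) /\ g (ginv b) = b.
    move=> b [a Aa gab]; have := @eps_spec T t0 (fun a => A a /\ g a = b).
    by apply; exists a.
  have BnA : forall b, B b -> ~ A b by move=> b [a Aa <-]; case: (gB a Aa).
  have BX : forall b, B b -> X b by move=> b [a Aa <-]; case: (gB a Aa).
  have gBB : forall a, A a -> B (g a) by move=> a Aa; exists a.
  have ginvI : forall b b', B b -> B b' -> ginv b = ginv b' -> b = b'.
    move=> b b' Bb Bb' E; case: (ginvP _ Bb) => _ <-; case: (ginvP _ Bb') => _ <-.
    by rewrite E.
  pose code (p : T * T) : T * (T * T) :=
    if pselect (A p.1) then (e 0, (p.1, ginv p.2))
    else if pselect (A p.2) then (e 1, (ginv p.1, p.2))
    else (e 2, (ginv p.1, ginv p.2)).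
  pose N (p : T * T) := (A p.1 \/ B p.1) /\ (A p.2 \/ B p.2) /\ ~ (A p.1 /\ A p.2).
  have codeE : forall x y, N (x, y) ->
      [\/ [/\ A x, B y & code (x, y) = (e 0, (x, ginv y))],
          [/\ B x, A y & code (x, y) = (e 1, (ginv x, y))] |
          [/\ B x, B y & code (x, y) = (e 2, (ginv x, ginv y))]].
    move=> x y [/= Hx [Hy nxy]]; rewrite /code /=.
    case: pselect => Ax.
      apply: Or31; split => //; case: Hy => // Ay; by exfalso; apply: nxy.
    have Bx : B x by case: Hx.
    case: pselect => Ay; first by apply: Or32.
    by apply: Or33; split => //; case: Hy.
  have codeA : forall p, N p -> [/\ A (code p).1, A (code p).2.1 & A (code p).2.2].
    move=> [x y] Np; case: (codeE x y Np) => -[Hx Hy ->] /=; split;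
      try exact: Ae; try done; try exact: (ginvP _ Hx).1; exact: (ginvP _ Hy).1.
  have codeI : forall p p', N p -> N p' -> code p = code p' -> p = p'.
    move=> [x y] [x' y'] Np Np'.
    case: (codeE x y Np) => -[Hx Hy ->];
    case: (codeE x' y' Np') => -[Hx' Hy' ->] E;
    have E0 := f_equal fst E; have E1 := f_equal (fun q => q.2.1) E;
    have E2 := f_equal (fun q => q.2.2) E; simpl in E0, E1, E2;
    (first [ by exfalso; move: E0 => /einj H; discriminate H
           | congr pair;
             [ first [exact: E1 | exact: ginvI _ _ Hx Hx' E1]
             | first [exact: E2 | exact: ginvI _ _ Hy Hy' E2]]]).
  pose h p := f ((code p).1, f (code p).2).
  have fA2 : forall p, N p -> A (f (code p).2).
    move=> p Np; case: (codeA p Np) => H1 H2 H3.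
    by rewrite [(code p).2]surjective_pairing; apply: fA.
  have hA : forall p, N p -> A (h p).
    move=> p Np; case: (codeA p Np) => H1 H2 H3.
    by apply: fA => //; apply: fA2.
  have hI : forall p p', N p -> N p' -> h p = h p' -> p = p'.
    move=> p p' Np Np' E; apply: codeI => //.
    case: (codeA p Np) => H1 H2 H3; case: (codeA p' Np') => H1' H2' H3'.
    have [E1 E2] := finj _ _ _ _ H1 (fA2 p Np) H1' (fA2 p' Np') E.
    move: E2; rewrite [(code p).2]surjective_pairing [(code p').2]surjective_pairing.
    move=> E2; have [E3 E4] := finj _ _ _ _ H2 H3 H2' H3' E2.
    exact: pair3.
  pose G' : set ((T * T) * T) := fun q => G q \/ (N q.1 /\ q.2 = g (h q.1)).
  have DomG' : forall x, Dom G' x <-> A x \/ B x.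
    move=> x; split.
      move=> [y [z [Gq|[[Hx _] _]]]]; last exact: Hx.
      by left; exact: (GA _ _ _ Gq).1.
    case=> [[y [z H]]|Bx]; first by exists y, z; left.
    exists x, (g (h (x, x))); right; split => //.
    by split; [right|split; [right|case=> /(BnA _ Bx)]].
  have G'P : PP G'.
    split; last by move=> _ q G0q; left; apply: sub0.
    split.
    - move=> [x y] z z' [H1|[N1 E1]] [H2|[N2 E2]].
      + exact: (gf Gg H1 H2).
      + by exfalso; case: N2 => _ [_ /= []]; apply: GA H1.
      + by exfalso; case: N1 => _ [_ /= []]; apply: GA H2.
      + by rewrite /= in E1 E2; rewrite E1 E2.
    - move=> p p' z [H1|[N1 /= E1]] [H2|[N2 /= E2]].
      + exact: (gi Gg H1 H2).
      + by exfalso; apply: (BnA z); [rewrite E2; apply: gBB; apply: hA | apply: (gr Gg H1)].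
      + by exfalso; apply: (BnA z); [rewrite E1; apply: gBB; apply: hA | apply: (gr Gg H2)].
      + apply: hI => //; apply: ginj; try apply: hA => //.
        by rewrite -E1 -E2.
    - move=> x y /DomG' Hx /DomG' Hy.
      case: (classic (A x /\ A y)) => [[Ax Ay]|nA].
        by have [z Hz] := gd Gg Ax Ay; exists z; left.
      by exists (g (h (x, y))); right; split.
    - move=> x y z [H|[[_ [Hy _]] _]]; apply/DomG'; last exact: Hy.
      by left; exact: (GA _ _ _ H).2.
    - move=> p z [H|[Np /= E]]; apply/DomG'; first by left; apply: (gr Gg H).
      by right; rewrite E; apply: gBB; apply: hA.
    - by move=> x /DomG' [Ax|Bx]; [exact: AX | exact: BX].
  apply: (Gmax G') => //; split; first by move=> q Gq; left.
  move=> H.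
  pose b := g (e 0).
  have Bb : B b by apply: gBB; apply: Ae.
  have Nbb : N (b, b).
    by split; [right|split; [right|case=> /(BnA _ Bb)]].
  have := H ((b, b), g (h (b, b))) (or_intror (conj Nbb erefl)).
  by move=> /GA [/(BnA _ Bb)].
have [k [kA kinj]] : le (fun x => X x /\ ~ A x) A.
  by case: (comparable t0 A (fun x => X x /\ ~ A x)) => // H; exfalso; exact: nle H.
pose j x := if pselect (A x) then (x, e 0) else (k x, e 1).
have jA : forall x, X x -> A (j x).1 /\ A (j x).2.
  move=> x Xx; rewrite /j; case: pselect => Ax /=; split => //; try exact: Ae.
  by apply: kA.
have jI : forall x y, X x -> X y -> j x = j y -> x = y.
  move=> x y Xx Xy; rewrite /j; case: pselect => Ax; case: pselect => Ay /=.
  - by move=> E; exact: (f_equal fst E).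
  - by move=> E; have := f_equal snd E => /einj.
  - by move=> E; have := f_equal snd E => /einj.
  - by move=> E; apply: kinj => //; exact: (f_equal fst E).
have fj : forall x, X x -> A (f (j x)).
  move=> x Xx; case: (jA x Xx) => H1 H2.
  by rewrite [j x]surjective_pairing; apply: fA.
exists (fun p => f (f (j p.1), f (j p.2))); split.
  by move=> [x y] [Xx Xy] /=; apply: AX; apply: fA; apply: fj.
move=> [x y] [x' y'] [/= Xx Xy] [/= Xx' Xy'] E.
have [E1 E2] := finj _ _ _ _ (fj _ Xx) (fj _ Xy) (fj _ Xx') (fj _ Xy') E.
have jf : forall x x', X x -> X x' -> f (j x) = f (j x') -> x = x'.
  move=> u u' Xu Xu' Eu; apply: jI => //.
  case: (jA u Xu) => Hu1 Hu2; case: (jA u' Xu') => Hu1' Hu2'.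
  move: Eu; rewrite [j u]surjective_pairing [j u']surjective_pairing => Eu.
  have [-> ->] := finj _ _ _ _ Hu1 Hu2 Hu1' Hu2' Eu.
  by rewrite -!surjective_pairing.
by rewrite (jf _ _ Xx Xx' E1) (jf _ _ Xy Xy' E2).
Qed.

End Hess.

End Helpers.

Section Helpers2.
Import GRing.Theory.

Lemma nat_inj (T : eqType) (t0 : T) (X : T -> Prop) :
  (forall s : seq T, exists x, X x /\ x \notin s) ->
  exists e : nat -> T, (forall n, X (e n)) /\ (forall n m, e n = e m -> n = m).
Proof.
move=> H; pose pick (s : seq T) := eps t0 (fun x => X x /\ x \notin s).
have pickP (s : seq T) : X (pick s) /\ pick s \notin s.
  by have := @eps_spec T t0 (fun x => X x /\ x \notin s); apply; apply: H.
pose fix sq n := if n is n'.+1 then rcons (sq n') (pick (sq n')) else [::].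
exists (fun n => pick (sq n)); split; first by move=> n; case: (pickP (sq n)).
have mem : forall n k, (k < n)%N -> pick (sq k) \in sq n.
  elim=> // n IH k; rewrite ltnS leq_eqVlt => /orP [/eqP ->|/IH Hk] /=;
    by rewrite mem_rcons inE ?eqxx ?Hk ?orbT.
move=> n m E; case: (ltngtP n m) => [H'|H'|//]; exfalso.
  by have := mem _ _ H'; rewrite E; case: (pickP (sq m)) => _ /negP.
by have := mem _ _ H'; rewrite -E; case: (pickP (sq n)) => _ /negP.
Qed.

Lemma nat_pair : exists pr : nat * nat -> nat, forall p q, pr p = pr q -> p = q.
Proof.
have := card_nat2; rewrite card_eq_le => /andP [H _].
have /pcard_injP [f finj] := H.
by exists f => p q E; apply: finj => //; rewrite in_setT.
Qed.

Lemma hessenberg (T : eqType) (t0 : T) (X : T -> Prop) :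
  (forall s : seq T, exists x, X x /\ x \notin s) ->
  exists h : T * T -> T, inj_on (fun p => X p.1 /\ X p.2) X h.
Proof.
move=> /(nat_inj t0) [e [eX einj]]; have [pr prinj] := nat_pair.
exact: hess_main eX einj prinj.
Qed.

Lemma le_card T U (A : set T) (B : set U) : le A B -> (A #<= B)%card.
Proof.
move=> [f [f1 f2]].
have [g] : $|{injfun A >-> B}|.
  apply/injfunPex; exists f; first by move=> x Ax; apply: f1.
  by move=> x y /set_mem Ax /set_mem Ay; apply: f2.
exact: inj_card_le g.
Qed.

Lemma csb T U (f : T -> U) (g : U -> T) :
  injective f -> injective g -> exists h : T -> U, bijective h.
Proof.
move=> fi gi.
have H1 : le (@setT T) (@setT U) by exists f; split => // x y _ _; apply: fi.
have H2 : le (@setT U) (@setT T) by exists g; split => // x y _ _; apply: gi.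
have /card_bijP [k kb] := Cantor_Bernstein (le_card H1) (le_card H2).
pose toS (x : T) : (@setT T) := SigSub (mem_set (I : (@setT T) x)).
have toSb : bijective toS.
  exists val => // -[x Px]; apply: val_inj => //.
have valb : bijective (val : (@setT U) -> U).
  exists (fun y => SigSub (mem_set (I : (@setT U) y))) => // -[y Py].
  exact: val_inj.
exists (fun x => val (k (toS x))).
exact: bij_comp valb (bij_comp kb toSb).
Qed.

End Helpers2.

Section Helpers3.
Local Open Scope ring_scope.
Import GRing.Theory.

Section Topo.
Variable L : fieldType.
Unset Implicit Arguments.
Variable sys : forall n : nat, ({mpoly L[n]} -> Prop) -> (('I_n -> L) -> Prop) -> Prop.
Hypothesis Hsys : system_of_topologies sys.
Set Implicit Arguments.

Local Notation Z n := (@zero_ideal L n).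

Lemma points_zero n (x : 'I_n -> L) : points (Z n) x.
Proof. by move=> p ->; rewrite meval0. Qed.

Lemma zero_ideal_is n : is_ideal (Z n).
Proof.
split => //; first by move=> p q -> ->; rewrite addr0.
by move=> a p ->; rewrite mulr0.
Qed.

Lemma zero_morph n m (phi : m.-tuple {mpoly L[n]}) : is_morphism (Z n) (Z m) phi.
Proof. by move=> g ->; rewrite /pullback comp_mpoly0. Qed.

Lemma cont n m (phi : m.-tuple {mpoly L[n]}) U :
  sys m (Z m) U -> sys n (Z n) (fun x => U (point_map phi x)).
Proof.
move=> HU; case: Hsys => _ H2 _ _.
have := H2 n (Z n) m (Z m) phi (zero_ideal_is n) (zero_ideal_is m) (zero_morph phi) U HU.
suff -> : (fun x => points (Z n) x /\ U (point_map phi x)) =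
          (fun x => U (point_map phi x)) by [].
apply: funext => x; apply: propext; split; first by case.
by move=> H; split => //; apply: points_zero.
Qed.

Lemma top1 : is_topology (points (Z 1)) (sys 1 (Z 1)).
Proof. by case: Hsys => H1 _ _ _; apply: H1; apply: zero_ideal_is. Qed.

Lemma pt_eq (x y : 'I_1 -> L) : x ord0 = y ord0 -> x = y.
Proof. by move=> E; apply: funext => i; rewrite (ord1 i). Qed.

Lemma no_isolated : ~ discrete_system sys ->
  forall V p, sys 1 (Z 1) V -> V p -> exists q, V q /\ q ord0 <> p ord0.
Proof.
move=> ND V p HV Vp; apply: NNPP => H; apply: ND => U.
have Hq : forall q, V q -> q ord0 = p ord0.
  by move=> q Vq; apply: NNPP => nq; apply: H; exists q.
pose phi (a : 'I_1 -> L) : 1.-tuple {mpoly L[1]} :=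
  [tuple 'X_ord0 + (p ord0 - a ord0)%:MP | i < 1].
pose S a x := V (point_map (phi a) x).
have pmE : forall a x, point_map (phi a) x = fun _ => x ord0 + (p ord0 - a ord0).
  move=> a x; apply: funext => j.
  by rewrite /point_map tnth_mktuple mevalD mevalXU mevalC.
have SE : forall a x, S a x <-> x = a.
  move=> a x; rewrite /S pmE; split.
    move=> /Hq /= E; apply: pt_eq; move: E => /(congr1 (fun t => t - (p ord0 - a ord0))).
    by rewrite addrK => ->; rewrite opprB addrCA subrr addr0.
  move=> ->; suff -> : (fun _ : 'I_1 => a ord0 + (p ord0 - a ord0)) = p by [].
  by apply: pt_eq; rewrite addrC subrK.
have SO : forall a, sys 1 (Z 1) (S a) by move=> a; apply: cont.
case: top1 => _ _ Hun _.
have := Hun (fun W => exists2 a, U a & W = S a).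
have -> : (fun x => exists2 W, (exists2 a, U a & W = S a) & W x) = U.
  apply: funext => x; apply: propext; split.
    by move=> [W [a Ua ->]] /SE ->.
  by move=> Ux; exists (S x); [exists x | apply/SE].
by apply => W [a _ ->].
Qed.

End Topo.


Lemma tup_inj (T : Type) (t0 : T) (hh : T * T -> T) : injective hh ->
  forall m, exists f : ('I_m -> T) -> T, injective f.
Proof.
move=> hi; elim=> [|m [f fi]].
  by exists (fun _ => t0) => x y _; apply: funext => -[].
exists (fun x => hh (x ord0, f (fun i => x (lift ord0 i)))).
move=> x y /hi [E1 /fi E2]; apply: funext => j.
case: (unliftP ord0 j) => [j' ->|->] //.
exact: (congr1 (fun k => k j') E2).
Qed.


End Helpers3.

Unset Implicit Arguments. Set Strict Implicit.
Theorem proposition4p2 (L : fieldType)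
  (sys : forall n : nat, ({mpoly L[n]} -> Prop) -> (('I_n -> L) -> Prop) -> Prop)
  (m : nat) (O : ('I_m -> L) -> Prop) :
  infinite_type L ->
  system_of_topologies sys ->
  ~ discrete_system sys ->
  (0 < m)%N ->
  sys m (@zero_ideal L m) O ->
  (exists x, O x) ->
  exists f : {x : 'I_m -> L | O x} -> L, bijective f.
Proof.
move=> Hinf Hsys ND m0 HO [a Oa].
pose i0 : 'I_m := Ordinal m0.
pose phi : m.-tuple {mpoly L[1]} :=
  [tuple ((a j)%:MP + (if j == i0 then 'X_ord0 else 0))%R | j < m].
have pmE : forall x, point_map phi x = fun j => (a j + (if j == i0 then x ord0 else 0))%R.
  move=> x; apply: funext => j; rewrite /point_map tnth_mktuple mevalD mevalC.
  by case: (j == i0); [rewrite mevalXU | rewrite meval0].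
pose pt (t : L) : 'I_1 -> L := fun _ => t.
pose Us t := O (point_map phi (pt t)).
have U1O : sys 1 (@zero_ideal L 1) (fun x => O (point_map phi x)) := cont Hsys phi HO.
have Us0 : Us 0%R.
  rewrite /Us pmE; suff -> : (fun j => (a j + (if j == i0 then pt 0%R ord0 else 0))%R) = a by [].
  by apply: funext => j; case: ifP => _; rewrite GRing.addr0.
have scale : forall c : L, c != 0%R -> exists v : L, v != 0%R /\ Us v /\ Us (c * v)%R.
  move=> c c0.
  pose psi : 1.-tuple {mpoly L[1]} := [tuple (c *: 'X_ord0)%R | i < 1].
  have psE : forall x, point_map psi x = pt (c * x ord0)%R.
    by move=> x; apply: funext => j; rewrite /point_map tnth_mktuple mevalZ mevalXU.
  pose S x := O (point_map phi x) /\ O (point_map phi (point_map psi x)).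
  have SO : sys 1 (@zero_ideal L 1) S.
    case: (top1 Hsys) => _ _ _ Hint; apply: Hint; first exact: U1O.
    exact: (cont Hsys psi U1O).
  have S0 : S (pt 0%R).
    by split; [exact: Us0 | rewrite psE GRing.mulr0; exact: Us0].
  have [q [Sq qne]] := no_isolated Hsys ND SO S0.
  exists (q ord0); split; first by apply/eqP.
  have qE : q = pt (q ord0) by apply: pt_eq.
  by case: Sq; rewrite psE {1}qE.
have Uinf : forall s : seq L, exists x, Us x /\ x \notin s.
  move=> s; apply: NNPP => H.
  have Hs : forall x, Us x -> x \in s.
    by move=> x Ux; apply: NNPP => /negP xs; apply: H; exists x.
  have [x xn] := Hinf (0%R :: [seq (u / v)%R | u <- s, v <- s]).
  rewrite inE negb_or in xn; case/andP: xn => x0 xn.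
  have [v [v0 [Uv Ucv]]] := scale x x0.
  apply: (negP xn); rewrite -[x](GRing.mulfK v0).
  by apply: (allpairs_f (fun u v => (u / v)%R)); apply: Hs.
have [hU [hU1 hU2]] := hessenberg 0%R Uinf.
have [hL [_ hL2]] : exists h : L * L -> L, inj_on (fun p => True /\ True) (fun _ => True) h.
  by apply: (hessenberg 0%R) => s; have [x xs] := Hinf s; exists x.
pose pair c := eps (0%R, 0%R) (fun p : L * L => [/\ Us p.1, Us p.2 & (p.1 / p.2)%R = c]).
have pairP : forall c, [/\ Us (pair c).1, Us (pair c).2 & ((pair c).1 / (pair c).2)%R = c].
  move=> c; have := @eps_spec _ (0%R, 0%R) (fun p : L * L => [/\ Us p.1, Us p.2 & (p.1 / p.2)%R = c]).
  apply; case: (eqVneq c 0%R) => [->|c0].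
    by exists (0%R, 0%R); split => //=; rewrite GRing.mul0r.
  have [v [v0 [Uv Ucv]]] := scale c c0.
  by exists ((c * v)%R, v); split => //=; rewrite GRing.mulfK.
pose Fc c := hU (pair c).
have FcU : forall c, Us (Fc c) by move=> c; apply: hU1; case: (pairP c).
have Fcinj : forall c c', Fc c = Fc c' -> c = c'.
  move=> c c' E; have := hU2 _ _ _ _ E.
  case: (pairP c) => H1 H2 H3; case: (pairP c') => H1' H2' H3'.
  by move=> /(_ (conj H1 H2) (conj H1' H2')) E'; rewrite -H3 -H3' E'.
pose Gc c : {x : 'I_m -> L | O x} := exist _ (point_map phi (pt (Fc c))) (FcU c).
have Gcinj : injective Gc.
  move=> c c' /(congr1 (@proj1_sig _ _)) /= /(congr1 (fun y => y i0)).
  by rewrite !pmE /= => /GRing.addrI /Fcinj.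
have [tf tfi] := tup_inj 0%R (hh := hL) (fun p q E => hL2 p q (conj I I) (conj I I) E) m.
have finj : injective (fun s : {x : 'I_m -> L | O x} => tf (proj1_sig s)).
  by move=> [x Ox] [y Oy] /tfi /= E; apply: eq_exist.
have [h hb] := csb finj Gcinj.
by exists h.
Qed.
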